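(* If a non-P-point $\mathcal W$ in standard position on $\omega^2$ is $(2,4)$-weakly Ramsey, then $\mathcal W$ has the three-functions property: for every function $f$ on $\omega^2$ there is $H\in\mathcal W$ such that $f\restriction H$ is constant, or one-to-one, or equal to $g\circ\pi_1\restriction H$ for some one-to-one function $g$ on $\omega$.
   Context: Ultrafilters are nonprincipal. $\pi_1:\omega^2\to\omega$ is the first projection. A non-P-point in standard position is an ultrafilter $\mathcal W$ on $\omega^2$ such that $\pi_1$ is neither finite-to-one nor constant on any set in $\mathcal W$. $\mathcal W$ is $(n,t)$-weakly Ramsey if whenever $[\omega^2]^n$ is partitioned into finitely many pieces there is $H\in\mathcal W$ with $[H]^n$ meeting at most $t$ pieces. *)

(* Defs.v *)
(* sets are predicates. omega^2 is modelled as nat * nat. *)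
From Stdlib Require Import List Arith.
Import ListNotations.

Definition omega2 := (nat * nat)%type.

Definition pi1 (p : omega2) : nat := fst p.

Definition is_ultrafilter {X : Type} (U : (X -> Prop) -> Prop) : Prop :=
  U (fun _ => True) /\
  ~ U (fun _ => False) /\
  (forall A B : X -> Prop, U A -> (forall x, A x -> B x) -> U B) /\
  (forall A B : X -> Prop, U A -> U B -> U (fun x => A x /\ B x)) /\
  (forall A : X -> Prop, U A \/ U (fun x => ~ A x)).

Definition nonprincipal {X : Type} (U : (X -> Prop) -> Prop) : Prop :=
  forall x : X, ~ U (fun y => y = x).

Definition finite_set (S : omega2 -> Prop) : Prop :=
  exists l : list omega2, forall p, S p -> In p l.

Definition pi1_finite_to_one_on (H : omega2 -> Prop) : Prop :=
  forall n : nat, finite_set (fun p => H p /\ pi1 p = n).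

Definition pi1_constant_on (H : omega2 -> Prop) : Prop :=
  exists n : nat, forall p, H p -> pi1 p = n.

Definition non_P_point_standard (W : (omega2 -> Prop) -> Prop) : Prop :=
  is_ultrafilter W /\ nonprincipal W /\
  (forall H, W H -> ~ pi1_finite_to_one_on H /\ ~ pi1_constant_on H).

(* (2,t)-weakly Ramsey: a partition of [omega^2]^2 into finitely many pieces
   is given by a symmetric colouring c of pairs of distinct points with
   colours < k; we ask for H in W such that [H]^2 meets at most t pieces,
   i.e. the colours used on [H]^2 lie in a list of length <= t. *)
Definition weakly_Ramsey_2 (W : (omega2 -> Prop) -> Prop) (t : nat) : Prop :=
  forall (k : nat) (c : omega2 -> omega2 -> nat),
    (forall x y, x <> y -> c x y = c y x) ->
    (forall x y, x <> y -> c x y < k) ->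
    exists H, W H /\
      exists l : list nat, length l <= t /\
        forall x y, H x -> H y -> x <> y -> In (c x y) l.

Definition three_functions_property (W : (omega2 -> Prop) -> Prop) : Prop :=
  forall (Y : Type) (f : omega2 -> Y),
    exists H, W H /\
      ((forall x y, H x -> H y -> f x = f y) \/
       (forall x y, H x -> H y -> f x = f y -> x = y) \/
       (exists g : nat -> Y,
          (forall m n, g m = g n -> m = n) /\
          (forall x, H x -> f x = g (pi1 x)))).

(* Main.v *)
From Stdlib Require Import List Arith Lia Classical ClassicalEpsilon.
Import ListNotations.
Require Import Defs.

Definition ef {Y : Type} (f : omega2 -> Y) (x y : omega2) : nat :=
  if excluded_middle_informative (f x = f y) then 0 else 1.

Lemma ef_eq {Y} (f : omega2 -> Y) x y : f x = f y -> ef f x y = 0.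
Proof. unfold ef; destruct (excluded_middle_informative _); tauto. Qed.
Lemma ef_neq {Y} (f : omega2 -> Y) x y : f x <> f y -> ef f x y = 1.
Proof. unfold ef; destruct (excluded_middle_informative _); tauto. Qed.
Lemma ef_le {Y} (f : omega2 -> Y) x y : ef f x y <= 1.
Proof. unfold ef; destruct (excluded_middle_informative _); lia. Qed.
Lemma ef_sym {Y} (f : omega2 -> Y) x y : ef f x y = ef f y x.
Proof. unfold ef; destruct (excluded_middle_informative _);
  destruct (excluded_middle_informative _); congruence. Qed.
Lemma ef_iff {Y} (f : omega2 -> Y) x y u v : (f x = f y <-> f u = f v) -> ef f x y = ef f u v.
Proof. intro E. unfold ef; destruct (excluded_middle_informative _);
  destruct (excluded_middle_informative _); tauto. Qed.

Definition sh (x y : omega2) : nat :=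
  (if snd x <? snd y then 0 else 2) + (if snd x <? fst y then 0 else 1).

Definition colr {Y : Type} (f : omega2 -> Y) (x y : omega2) : nat :=
  if fst x =? fst y then ef f x y
  else if fst x <? fst y then 2 + 2 * sh x y + ef f x y
  else 2 + 2 * sh y x + ef f y x.

Lemma sh_le x y : sh x y <= 3.
Proof. unfold sh; destruct (_ <? _); destruct (_ <? _); lia. Qed.

Lemma colr_sym {Y} (f : omega2 -> Y) x y : x <> y -> colr f x y = colr f y x.
Proof.
  intros _. unfold colr.
  destruct (Nat.eqb_spec (fst x) (fst y)); destruct (Nat.eqb_spec (fst y) (fst x)); try lia.
  - apply ef_sym.
  - destruct (Nat.ltb_spec0 (fst x) (fst y)); destruct (Nat.ltb_spec0 (fst y) (fst x)); try lia; reflexivity.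
Qed.

Lemma colr_lt {Y} (f : omega2 -> Y) x y : x <> y -> colr f x y < 10.
Proof.
  intros _. unfold colr. pose proof (sh_le x y). pose proof (sh_le y x).
  pose proof (ef_le f x y). pose proof (ef_le f y x).
  destruct (_ =? _); [lia|]. destruct (_ <? _); lia.
Qed.

Lemma colr_same {Y} (f : omega2 -> Y) x y : fst x = fst y -> colr f x y = ef f x y.
Proof. intro E; unfold colr; rewrite (proj2 (Nat.eqb_eq _ _) E); reflexivity. Qed.

Lemma colr_ltc {Y} (f : omega2 -> Y) x y : fst x < fst y -> colr f x y = 2 + 2 * sh x y + ef f x y.
Proof. intro E; unfold colr. rewrite (proj2 (Nat.eqb_neq _ _)) by lia.
  rewrite (proj2 (Nat.ltb_lt _ _) E). reflexivity. Qed.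

Lemma sh_TT x y : snd x < snd y -> snd x < fst y -> sh x y = 0.
Proof. intros; unfold sh; rewrite !(proj2 (Nat.ltb_lt _ _)) by lia; reflexivity. Qed.
Lemma sh_TF x y : snd x < snd y -> fst y <= snd x -> sh x y = 1.
Proof. intros; unfold sh; rewrite (proj2 (Nat.ltb_lt _ _)) by lia;
  rewrite (proj2 (Nat.ltb_ge _ _)) by lia; reflexivity. Qed.
Lemma sh_FF x y : snd y <= snd x -> fst y <= snd x -> sh x y = 3.
Proof. intros; unfold sh; rewrite !(proj2 (Nat.ltb_ge _ _)) by lia; reflexivity. Qed.

Lemma five (l : list nat) c1 c2 c3 c4 c5 : length l <= 4 ->
  In c1 l -> In c2 l -> In c3 l -> In c4 l -> In c5 l ->
  c1 <> c2 -> c1 <> c3 -> c1 <> c4 -> c1 <> c5 -> c2 <> c3 -> c2 <> c4 -> c2 <> c5 ->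
  c3 <> c4 -> c3 <> c5 -> c4 <> c5 -> False.
Proof.
  intros Hl I1 I2 I3 I4 I5; intros.
  assert (ND : NoDup [c1; c2; c3; c4; c5]).
  { repeat constructor; simpl; intuition. }
  assert (Inc : incl [c1; c2; c3; c4; c5] l).
  { intros z Hz; simpl in Hz; intuition congruence. }
  pose proof (NoDup_incl_length ND Inc). simpl in *. lia.
Qed.

Lemma Wsup (W : (omega2 -> Prop) -> Prop) (A B : omega2 -> Prop) : is_ultrafilter W -> W A -> (forall x, A x -> B x) -> W B.
Proof. intros (_&_&M&_&_); eauto. Qed.
Lemma Wint (W : (omega2 -> Prop) -> Prop) (A B : omega2 -> Prop) : is_ultrafilter W -> W A -> W B -> W (fun x => A x /\ B x).
Proof. intros (_&_&_&I&_); eauto. Qed.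
Lemma Wsplit (W : (omega2 -> Prop) -> Prop) (A : omega2 -> Prop) : is_ultrafilter W -> W A \/ W (fun x => ~ A x).
Proof. intros (_&_&_&_&S); eauto. Qed.
Lemma Wne (W : (omega2 -> Prop) -> Prop) (A : omega2 -> Prop) : is_ultrafilter W -> W A -> exists x, A x.
Proof. intros U WA. destruct (classic (exists x, A x)) as [|N]; auto.
  destruct U as (_&F&M&_&_). exfalso. apply F. apply (M A); auto. intros x Ax; apply N; eauto. Qed.
Lemma unbounded_cols (W : (omega2 -> Prop) -> Prop) : non_P_point_standard W ->
  forall m (H : omega2 -> Prop), W H -> exists p, H p /\ fst p >= m.
Proof.
  intros (U&_&NP). induction m; intros H WH.
  - destruct (Wne W H U WH) as [p Hp]; exists p; split; auto; lia.
  - destruct (classic (exists p, H p /\ fst p >= S m)) as [|Hn]; auto. exfalso.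
    destruct (Wsplit W (fun p => fst p = m) U) as [Wm|Wm].
    + pose proof (Wint W _ _ U WH Wm) as W2. apply (proj2 (NP _ W2)).
      exists m. intros p [_ Hp]; exact Hp.
    + pose proof (Wint W _ _ U WH Wm) as W2.
      destruct (IHm _ W2) as [p [[Hp1 Hp2] Hp3]]. apply Hn. exists p; split; auto; lia.
Qed.

Definition colset (H : omega2 -> Prop) (n : nat) := fun q => H q /\ pi1 q = n.
Definition Hi (H : omega2 -> Prop) := fun p => H p /\ ~ finite_set (colset H (pi1 p)).

Lemma Hi_W (W : (omega2 -> Prop) -> Prop) H : non_P_point_standard W -> W H -> W (Hi H).
Proof.
  intros NP WH. pose proof NP as (U&_&NPP).
  destruct (Wsplit W (Hi H) U) as [|Wc]; auto. exfalso.
  pose proof (Wint W _ _ U WH Wc) as W2. apply (proj1 (NPP _ W2)).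
  intro n. destruct (classic (finite_set (colset H n))) as [[l Hl]|Hn].
  - exists l. intros p [[Hp _] E]. apply Hl. split; auto.
  - exists []. intros p [[Hp Hc] E]. exfalso. apply Hc. split; auto. rewrite E; auto.
Qed.

Lemma Hi_col H p : Hi H p -> forall m, exists q, Hi H q /\ fst q = fst p /\ snd q >= m.
Proof.
  intros [Hp Hf] m. destruct (classic (exists q, Hi H q /\ fst q = fst p /\ snd q >= m)) as [|N]; auto.
  exfalso. apply Hf. exists (map (fun j => (fst p, j)) (seq 0 m)).
  intros q [Hq E]. unfold pi1 in E. apply in_map_iff. exists (snd q). split.
  - rewrite <- E. destruct q; reflexivity.
  - apply in_seq. destruct (le_lt_dec m (snd q)); [|lia]. exfalso. apply N. exists q.
    split; [|split; auto]. split; auto. unfold pi1 at 1. unfold pi1 in Hf. rewrite E. exact Hf.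
Qed.
Lemma g_lemma (W : (omega2 -> Prop) -> Prop) (Y : Type) (f : omega2 -> Y) (H : omega2 -> Prop) :
  is_ultrafilter W -> W H -> (forall m, exists p, H p /\ fst p >= m) ->
  (forall x y, H x -> H y -> (f x = f y <-> fst x = fst y)) ->
  exists H2, W H2 /\ exists g : nat -> Y,
    (forall m n, g m = g n -> m = n) /\ (forall x, H2 x -> f x = g (pi1 x)).
Proof.
  intros U WH Unb Hiff.
  set (inA := fun n => exists p, H p /\ fst p = n).
  set (cp := fun n => epsilon (inhabits (n,0)) (fun p => H p /\ fst p = n)).
  assert (cpS : forall n, inA n -> H (cp n) /\ fst (cp n) = n).
  { intros n Hn. apply (epsilon_spec (inhabits (n,0)) (fun p => H p /\ fst p = n) Hn). }
  set (h := fun n => f (cp n)).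
  assert (hinj : forall m n, inA m -> inA n -> h m = h n -> m = n).
  { intros m n Am An E. destruct (cpS m Am) as [H1 E1]. destruct (cpS n An) as [H2 E2].
    apply (Hiff _ _ H1 H2) in E. congruence. }
  assert (hval : forall x, H x -> f x = h (fst x)).
  { intros x Hx. assert (A : inA (fst x)) by (exists x; auto).
    destruct (cpS _ A) as [H1 E1]. unfold h. apply Hiff; auto. }
  set (nx := fun n => fst (epsilon (inhabits (0,0)) (fun p => H p /\ fst p > n))).
  assert (nxS : forall n, inA (nx n) /\ nx n > n).
  { intro n. destruct (Unb (S n)) as [p [Hp Hp2]].
    assert (ex : exists p, H p /\ fst p > n) by (exists p; split; auto; lia).
    pose proof (epsilon_spec (inhabits (0,0)) (fun p => H p /\ fst p > n) ex) as [E1 E2].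
    split; [eexists; split; [exact E1|reflexivity]|exact E2]. }
  set (en := fix en k := match k with 0 => nx 0 | S k => nx (en k) end).
  assert (enA : forall k, inA (en k)).
  { intros [|k]; simpl; apply nxS. }
  assert (enmono : forall i j, i < j -> en i < en j).
  { intros i j; induction j; intro L; [lia|].
    assert (en j < en (S j)) by (simpl; apply nxS).
    destruct (Nat.eq_dec i j); [subst; lia|]. specialize (IHj ltac:(lia)). lia. }
  assert (eninj : forall i j, en i = en j -> i = j).
  { intros i j E. destruct (lt_eq_lt_dec i j) as [[L|L]|L]; auto;
    apply enmono in L; lia. }
  set (S0 := fun n => exists k, n = en (2 * k)).
  destruct (Wsplit W (fun x => S0 (pi1 x)) U) as [WS|WS].
  - exists (fun x => H x /\ S0 (pi1 x)). split; [apply Wint; auto|].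
    exists (fun n => if excluded_middle_informative (S0 n) then h n else h (en (2 * n + 1))).
    split.
    + intros m n. destruct (excluded_middle_informative (S0 m)) as [[k Hk]|Nm];
      destruct (excluded_middle_informative (S0 n)) as [[k' Hk']|Nn]; intro E.
      * subst. f_equal. apply hinj in E; auto.
      * subst. apply hinj in E; auto. apply eninj in E; lia.
      * subst. apply hinj in E; auto. apply eninj in E; lia.
      * apply hinj in E; auto. apply eninj in E; lia.
    + intros x [Hx Sx]. destruct (excluded_middle_informative (S0 (pi1 x))); [|tauto].
      apply hval; auto.
  - exists (fun x => H x /\ ~ S0 (pi1 x)). split; [apply Wint; auto|].
    exists (fun n => if excluded_middle_informative (inA n /\ ~ S0 n) then h n else h (en (2 * n))).
    split.
    + intros m n. destruct (excluded_middle_informative (inA m /\ ~ S0 m)) as [[Am Nm]|Nm];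
      destruct (excluded_middle_informative (inA n /\ ~ S0 n)) as [[An Nn]|Nn]; intro E.
      * apply hinj in E; auto.
      * apply hinj in E; auto. exfalso; apply Nm. exists n; auto.
      * apply hinj in E; auto. exfalso; apply Nn. exists m; auto.
      * apply hinj in E; auto. apply eninj in E; lia.
    + intros x [Hx Sx]. destruct (excluded_middle_informative (inA (pi1 x) /\ ~ S0 (pi1 x))) as [_|N].
      * apply hval; auto.
      * exfalso. apply N. split; auto. exists x; auto.
Qed.
Lemma bTT (H : omega2 -> Prop) :
  (forall p, H p -> forall m, exists q, H q /\ fst q = fst p /\ snd q >= m) ->
  (forall m, exists p, H p /\ fst p >= m) ->
  exists x y1 y2, H x /\ H y1 /\ H y2 /\ fst y1 = fst y2 /\ fst x < fst y1 /\
    snd x < snd y1 /\ snd y1 < snd y2 /\ snd x < fst y1.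
Proof.
  intros Cp Cs. destruct (Cs 0) as [x [Hx _]].
  destruct (Cs (S (fst x + snd x))) as [p [Hp Lp]].
  destruct (Cp p Hp (S (snd x))) as [y1 [Hy1 [E1 L1]]].
  destruct (Cp p Hp (S (snd y1))) as [y2 [Hy2 [E2 L2]]].
  exists x, y1, y2. repeat split; auto; lia.
Qed.

Lemma bTF (H : omega2 -> Prop) :
  (forall p, H p -> forall m, exists q, H q /\ fst q = fst p /\ snd q >= m) ->
  (forall m, exists p, H p /\ fst p >= m) ->
  exists x y1 y2, H x /\ H y1 /\ H y2 /\ fst y1 = fst y2 /\ fst x < fst y1 /\
    snd x < snd y1 /\ snd y1 < snd y2 /\ fst y1 <= snd x.
Proof.
  intros Cp Cs. destruct (Cs 0) as [x0 [Hx0 _]].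
  destruct (Cs (S (fst x0))) as [p [Hp Lp]].
  destruct (Cp x0 Hx0 (fst p)) as [x [Hx [Ex Lx]]].
  destruct (Cp p Hp (S (snd x))) as [y1 [Hy1 [E1 L1]]].
  destruct (Cp p Hp (S (snd y1))) as [y2 [Hy2 [E2 L2]]].
  exists x, y1, y2. repeat split; auto; lia.
Qed.

Lemma bFF (H : omega2 -> Prop) :
  (forall p, H p -> forall m, exists q, H q /\ fst q = fst p /\ snd q >= m) ->
  (forall m, exists p, H p /\ fst p >= m) ->
  exists x1 x2 y, H x1 /\ H x2 /\ H y /\ fst x1 = fst x2 /\ fst x1 < fst y /\
    fst y <= snd x1 /\ snd y <= snd x1 /\ snd x1 < snd x2.
Proof.
  intros Cp Cs. destruct (Cs 0) as [x0 [Hx0 _]].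
  destruct (Cs (S (fst x0))) as [p [Hp Lp]].
  destruct (Cp x0 Hx0 (fst p + snd p)) as [x1 [Hx1 [E1 L1]]].
  destruct (Cp x0 Hx0 (S (snd x1))) as [x2 [Hx2 [E2 L2]]].
  exists x1, x2, p. repeat split; auto; lia.
Qed.

Lemma pair_neq (x y : omega2) : fst x <> fst y \/ snd x <> snd y -> x <> y.
Proof. intros [A|A] E; subst; tauto. Qed.
Lemma ordp (P : omega2 -> omega2 -> Prop) : (forall x y, P x y -> P y x) ->
  forall x y, fst x <> fst y -> P x y -> exists u v, fst u < fst v /\ P u v.
Proof. intros S x y D Pxy. destruct (Nat.lt_gt_cases (fst x) (fst y)) as [[L|L] _]; auto.
  - exists x, y; auto.
  - exists y, x; auto. Qed.

Theorem mainTheorem6 (W : (omega2 -> Prop) -> Prop) :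
  non_P_point_standard W -> weakly_Ramsey_2 W 4 -> three_functions_property W.
Proof.
  intros NP WR Y f. pose proof NP as (U&_&_).
  destruct (WR 10 (colr f) (colr_sym f) (colr_lt f)) as [H0 [WH0 [l [Hl Hc0]]]].
  set (H := Hi H0).
  assert (WH : W H) by (apply Hi_W; auto).
  assert (Hc : forall x y, H x -> H y -> x <> y -> In (colr f x y) l)
    by (intros x y [] [] ?; auto).
  assert (Cp : forall p, H p -> forall m, exists q, H q /\ fst q = fst p /\ snd q >= m)
    by (intros p Hp m; destruct (Hi_col H0 p Hp m) as [q [? [? ?]]]; exists q; auto).
  assert (Cs : forall m, exists p, H p /\ fst p >= m) by (intro m; apply (unbounded_cols W NP m H WH)).
  assert (FTT : exists c, (c = 2 \/ c = 3) /\ In c l).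
  { destruct (bTT H Cp Cs) as (x&y1&y2&Hx&Hy1&_&_&L1&L2&_&L3). exists (colr f x y1). split.
    - rewrite colr_ltc, sh_TT by lia. pose proof (ef_le f x y1); lia.
    - apply Hc; auto; apply pair_neq; lia. }
  assert (FTF : exists c, (c = 4 \/ c = 5) /\ In c l).
  { destruct (bTF H Cp Cs) as (x&y1&y2&Hx&Hy1&_&_&L1&L2&_&L3). exists (colr f x y1). split.
    - rewrite colr_ltc, sh_TF by lia. pose proof (ef_le f x y1); lia.
    - apply Hc; auto; apply pair_neq; lia. }
  assert (FFF : exists c, (c = 8 \/ c = 9) /\ In c l).
  { destruct (bFF H Cp Cs) as (x1&x2&y&Hx1&_&Hy&_&L1&L2&L3&_). exists (colr f x1 y). split.
    - rewrite colr_ltc, sh_FF by lia. pose proof (ef_le f x1 y); lia.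
    - apply Hc; auto; apply pair_neq; lia. }
  assert (SC : exists u v, H u /\ H v /\ fst u = fst v /\ u <> v).
  { destruct (Cs 0) as [p [Hp _]]. destruct (Cp p Hp (S (snd p))) as [q [Hq [E L]]].
    exists p, q. split; [|split; [|split]]; auto. apply pair_neq; lia. }
  destruct FTT as [c2 [E2 I2]]. destruct FTF as [c4 [E4 I4]]. destruct FFF as [c8 [E8 I8]].
  assert (Cases : (forall u v, H u -> H v -> fst u = fst v -> f u = f v) \/
                  (forall u v, H u -> H v -> fst u = fst v -> u <> v -> f u <> f v)).
  { destruct (classic (forall u v, H u -> H v -> fst u = fst v -> f u = f v)) as [|N1]; [left; auto|].
    destruct (classic (exists u v, H u /\ H v /\ fst u = fst v /\ f u <> f v)) as [[u' [v' (Hu'&Hv'&Ee'&Fe')]]|N2];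
      [|exfalso; apply N1; intros u v Hu Hv Euv; apply NNPP; intro Hne; apply N2; exists u, v; auto].
    right. intros u v Hu Hv Euv D Fe. exfalso.
    assert (D' : u' <> v') by (intro; subst; auto).
    apply (five l 0 1 c2 c4 c8); auto; try lia.
    - rewrite <- (ef_eq f u v Fe). rewrite <- colr_same by auto. apply Hc; auto.
    - rewrite <- (ef_neq f u' v' Fe'). rewrite <- colr_same by auto. apply Hc; auto. }
  destruct Cases as [SE|SN].
  - destruct (classic (forall x y, H x -> H y -> f x = f y)) as [Const|NC].
    { exists H; split; auto. }
    destruct (classic (forall x y, H x -> H y -> fst x <> fst y -> f x <> f y)) as [DN|NDN].
    { destruct (g_lemma W Y f H U WH Cs) as [H2 [WH2 G]].
      - intros x y Hx Hy; split; intro E.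
        + destruct (Nat.eq_dec (fst x) (fst y)) as [|n]; auto. exfalso; exact (DN x y Hx Hy n E).
        + apply SE; auto.
      - exists H2; split; auto. }
    exfalso.
    assert (Tr : forall u v, H u -> H v -> fst u < fst v -> In (4 + ef f u v) l /\ In (8 + ef f u v) l).
    { intros u v Hu Hv L. split.
      - destruct (Cp u Hu (fst v)) as [x' [Hx' [Ex Lx]]].
        destruct (Cp v Hv (S (snd x'))) as [y' [Hy' [Ey Ly]]].
        replace (4 + ef f u v) with (colr f x' y').
        + apply Hc; auto. apply pair_neq; lia.
        + rewrite colr_ltc, sh_TF by lia. rewrite (ef_iff f x' y' u v); [lia|].
          rewrite (SE x' u), (SE y' v); auto; tauto.
      - destruct (Cp u Hu (fst v + snd v)) as [x' [Hx' [Ex Lx]]].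
        replace (8 + ef f u v) with (colr f x' v).
        + apply Hc; auto. apply pair_neq; lia.
        + rewrite colr_ltc, sh_FF by lia. rewrite (ef_iff f x' v u v); [lia|].
          rewrite (SE x' u); auto; tauto. }
    destruct (classic (exists x y, H x /\ H y /\ f x <> f y)) as [[x [y (Hx&Hy&Fn)]]|N];
      [|apply NC; intros x y Hx Hy; apply NNPP; intro Hne; apply N; exists x, y; auto].
    destruct (classic (exists x y, H x /\ H y /\ fst x <> fst y /\ f x = f y)) as [[x' [y' (Hx'&Hy'&D'&Fe)]]|N];
      [|apply NDN; intros x0 y0 Hx0 Hy0 D0 F0; apply N; exists x0, y0; auto].
    assert (Dx : fst x <> fst y) by (intro E; apply Fn; apply SE; auto).
    destruct (ordp (fun u v => H u /\ H v /\ f u <> f v)) with x y as [u [v [L (Hu&Hv&Fuv)]]];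
      [intros a b (?&?&?); auto|auto|auto|].
    destruct (ordp (fun u v => H u /\ H v /\ f u = f v)) with x' y' as [u' [v' [L' (Hu'&Hv'&Fuv')]]];
      [intros a b (?&?&?); auto|auto|auto|].
    destruct (Tr u v Hu Hv L) as [I5 I9]. rewrite ef_neq in I5, I9 by auto.
    destruct (Tr u' v' Hu' Hv' L') as [I4' I8']. rewrite ef_eq in I4', I8' by auto.
    destruct SC as [a [b (Ha&Hb&Eab&Dab)]].
    assert (I0 : In 0 l).
    { rewrite <- (ef_eq f a b (SE a b Ha Hb Eab)). rewrite <- colr_same by auto. apply Hc; auto. }
    apply (five l 0 4 8 5 9); simpl in *; auto; lia.
  - destruct (classic (forall x y, H x -> H y -> fst x <> fst y -> f x <> f y)) as [DN|NDN].
    { exists H; split; auto. right; left. intros x y Hx Hy E.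
      destruct (Nat.eq_dec (fst x) (fst y)) as [e|n].
      - apply NNPP; intro D. exact (SN x y Hx Hy e D E).
      - exfalso; exact (DN x y Hx Hy n E). }
    exfalso.
    destruct (classic (exists x y, H x /\ H y /\ fst x <> fst y /\ f x = f y)) as [[x' [y' (Hx'&Hy'&D'&Fe)]]|N];
      [|apply NDN; intros x0 y0 Hx0 Hy0 D0 F0; apply N; exists x0, y0; auto].
    destruct (ordp (fun u v => H u /\ H v /\ f u = f v)) with x' y' as [u [v [L (Hu&Hv&Fuv)]]];
      [intros a b (?&?&?); auto|auto|auto|].
    assert (Iuv : In (2 + 2 * sh u v) l).
    { replace (2 + 2 * sh u v) with (colr f u v).
      - apply Hc; auto; apply pair_neq; lia.
      - rewrite colr_ltc, ef_eq by auto. lia. }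
    pose proof (sh_le u v).
    destruct SC as [a [b (Ha&Hb&Eab&Dab)]].
    assert (I1 : In 1 l).
    { rewrite <- (ef_neq f a b (SN a b Ha Hb Eab Dab)). rewrite <- colr_same by auto. apply Hc; auto. }
    assert (I3 : In 3 l).
    { destruct (bTT H Cp Cs) as (x&y1&y2&Hx&Hy1&Hy2&E12&L1&L2&L12&L3).
      assert (F12 : f y1 <> f y2) by (apply SN; auto; apply pair_neq; lia).
      destruct (classic (f x = f y1)) as [F1|F1].
      - replace 3 with (colr f x y2).
        + apply Hc; auto; apply pair_neq; lia.
        + rewrite colr_ltc, sh_TT, ef_neq by (try congruence; lia). lia.
      - replace 3 with (colr f x y1).
        + apply Hc; auto; apply pair_neq; lia.
        + rewrite colr_ltc, sh_TT, ef_neq by (try congruence; lia). lia. }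
    assert (I5 : In 5 l).
    { destruct (bTF H Cp Cs) as (x&y1&y2&Hx&Hy1&Hy2&E12&L1&L2&L12&L3).
      assert (F12 : f y1 <> f y2) by (apply SN; auto; apply pair_neq; lia).
      destruct (classic (f x = f y1)) as [F1|F1].
      - replace 5 with (colr f x y2).
        + apply Hc; auto; apply pair_neq; lia.
        + rewrite colr_ltc, sh_TF, ef_neq by (try congruence; lia). lia.
      - replace 5 with (colr f x y1).
        + apply Hc; auto; apply pair_neq; lia.
        + rewrite colr_ltc, sh_TF, ef_neq by (try congruence; lia). lia. }
    assert (I9 : In 9 l).
    { destruct (bFF H Cp Cs) as (x1&x2&y&Hx1&Hx2&Hy&E12&L1&L2&L3&L12).
      assert (F12 : f x1 <> f x2) by (apply SN; auto; apply pair_neq; lia).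
      destruct (classic (f x1 = f y)) as [F1|F1].
      - replace 9 with (colr f x2 y).
        + apply Hc; auto; apply pair_neq; lia.
        + rewrite colr_ltc, sh_FF, ef_neq by (try congruence; lia). lia.
      - replace 9 with (colr f x1 y).
        + apply Hc; auto; apply pair_neq; lia.
        + rewrite colr_ltc, sh_FF, ef_neq by (try congruence; lia). lia. }
    apply (five l 1 (2 + 2 * sh u v) 3 5 9); auto; lia.
Qed.
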